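(* Let $X_M^{(0)}, X_S^{(0)}$ be scalar random variables such that $[X_M^{(0)},X_S^{(0)}]$ is bivariate normal with mean zero, unit variances and covariance $\rho$. Let $X_S^{(t)}$ and $X_S^{(t+1)}$ be generated from $X_S^{(0)}$ by a forward noising process (independent of $X_M^{(0)}$ given $X_S^{(0)}$, and with $X_S^{(t+1)}$ independent of $(X_S^{(0)},X_M^{(0)})$ given $X_S^{(t)}$) with $q(X_S^{(t)}\mid X_S^{(0)})=\mathcal{N}(\sqrt{\bar\alpha_t}\,X_S^{(0)},1-\bar\alpha_t)$ and $q(X_S^{(t+1)}\mid X_S^{(t)})=\mathcal{N}(\sqrt{1-\beta_{t+1}}\,X_S^{(t)},\beta_{t+1})$, where $\beta_{t+1},\bar\alpha_t\in(0,1)$. Then $$\mathbb{E}\,\mathrm{KL}\Big(q(X_S^{(t)}\mid X_S^{(t+1)},X_M^{(0)})\,\Big\|\,q(X_S^{(t)}\mid X_S^{(t+1)})\Big)\ \ge\ -\tfrac12\Big(\log(1-\beta_{t+1}\bar\alpha_t\rho^2)+\beta_{t+1}\bar\alpha_t\rho^2\Big),$$ where the expectation is over the joint law of $(X_M^{(0)},X_S^{(t+1)})$.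
   Context: $\mathrm{KL}(f\|g)=\int f\log(f/g)$ with natural logarithm; $q(\cdot\mid\cdot)$ denotes conditional densities under the joint law of the described random variables. *)

(* Defs.v *)
From HB Require Import structures.
From mathcomp Require Import all_boot all_order all_algebra.
From mathcomp Require Import all_classical all_reals all_analysis.
Set Implicit Arguments. Unset Strict Implicit. Unset Printing Implicit Defensive.
Import Order.TTheory GRing.Theory Num.Theory.
Import numFieldNormedType.Exports.
Local Open Scope classical_set_scope.
Local Open Scope ring_scope.

Section Defs.
Variable R : realType.

Definition gauss_pdf (mu s2 x : R) : R :=
  expR (- (x - mu) ^+ 2 / (2 * s2)) / Num.sqrt (2 * pi * s2).

(* density of the centered bivariate normal with unit variances and
   covariance rho (requires rho^2 < 1) *)
Definition binorm_pdf (rho m s : R) : R :=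
  expR (- (m ^+ 2 - 2 * rho * m * s + s ^+ 2) / (2 * (1 - rho ^+ 2)))
  / (2 * pi * Num.sqrt (1 - rho ^+ 2)).

(* joint density of (X_M^(0), X_S^(0), X_S^(t), X_S^(t+1)) :
   q(m,s0) q(a|s0) q(b|a), encoding the conditional independence structure *)
Definition joint_pdf (rho abar beta m s0 a b : R) : R :=
  binorm_pdf rho m s0
  * gauss_pdf (Num.sqrt abar * s0) (1 - abar) a
  * gauss_pdf (Num.sqrt (1 - beta) * a) beta b.

Definition Rint (f : R -> R) : R :=
  fine (\int[@lebesgue_measure R]_x (f x)%:E)%E.

Definition q_amb rho abar beta (a m b : R) : R :=
  Rint (fun s0 => joint_pdf rho abar beta m s0 a b).
Definition q_mb rho abar beta (m b : R) : R :=
  Rint (fun a => q_amb rho abar beta a m b).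
Definition q_ab rho abar beta (a b : R) : R :=
  Rint (fun m => q_amb rho abar beta a m b).
Definition q_b rho abar beta (b : R) : R :=
  Rint (fun a => q_ab rho abar beta a b).

Definition cond_a_bm rho abar beta (m b : R) (a : R) : R :=
  q_amb rho abar beta a m b / q_mb rho abar beta m b.
Definition cond_a_b rho abar beta (b : R) (a : R) : R :=
  q_ab rho abar beta a b / q_b rho abar beta b.

Definition KL (f g : R -> R) : \bar R :=
  (\int[@lebesgue_measure R]_x (f x * ln (f x / g x))%:E)%E.

Definition expected_KL rho abar beta : \bar R :=
  (\int[@lebesgue_measure R]_m \int[@lebesgue_measure R]_b
     ((q_mb rho abar beta m b)%:E
      * KL (cond_a_bm rho abar beta m b) (cond_a_b rho abar beta b)))%E.

End Defs.

(* Main.v *)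
Require Import Defs.
From HB Require Import structures.
From mathcomp Require Import all_boot all_order all_algebra.
From mathcomp Require Import all_classical all_reals all_analysis.
From mathcomp Require Import ring lra measurable_realfun.
Set Implicit Arguments. Unset Strict Implicit. Unset Printing Implicit Defensive.
Import Order.TTheory GRing.Theory Num.Theory.
Import numFieldNormedType.Exports.
Local Open Scope classical_set_scope.
Local Open Scope ring_scope.

Section S.
Variable R : realType.
Notation mu := (@lebesgue_measure R).
Notation gp := (@gauss_pdf R).
Implicit Types (m v x : R).

Lemma gp_gt0 m v x : 0 < v -> 0 < gp m v x.
Proof. by move=> v0; rewrite /gauss_pdf divr_gt0 ?expR_gt0// sqrtr_gt0 mulr_gt0// mulr_gt0// pi_gt0. Qed.

Lemma gp_normal m v : 0 < v -> gp m v = normal_pdf m (Num.sqrt v).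
Proof.
move=> v0; apply/funext=> x.
rewrite /normal_pdf gt_eqF ?sqrtr_gt0//.
rewrite /normal_peak /normal_fun /gauss_pdf sqr_sqrtr ?ltW//.
rewrite mulrC; congr (_^-1 * expR (_ / _)); [congr Num.sqrt|]; ring.
Qed.

Lemma gp_int m v : 0 < v -> (\int[mu]_x (gp m v x)%:E = 1)%E.
Proof. by move=> v0; rewrite gp_normal// integral_normal_pdf. Qed.

Lemma gp_integrable m v : 0 < v -> mu.-integrable setT (fun x => (gp m v x)%:E).
Proof. by move=> v0; rewrite gp_normal//; exact: integrable_normal_pdf. Qed.

Lemma gp_cont m v : 0 < v -> continuous (gp m v).
Proof. by move=> v0; rewrite gp_normal//; apply: continuous_normal_pdf; rewrite gt_eqF ?sqrtr_gt0. Qed.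


Lemma expR_div2 x y a b : a != 0 -> b != 0 ->
  expR x / a * (expR y / b) = expR (x + y) / (a * b).
Proof. by move=> a0 b0; rewrite expRD invfM; ring. Qed.

Lemma gp_prod mu0 v c w s a M V mu1 v1 : 0 < v -> 0 < w ->
  V = c^+2 * v + w -> M = c * mu0 ->
  mu1 = (mu0 * w + c * v * a) / V -> v1 = v * w / V ->
  gp mu0 v s * gp (c * s) w a = gp M V a * gp mu1 v1 s.
Proof.
move=> v0 w0 -> -> -> ->.
have V0 : 0 < c^+2 * v + w by rewrite ltr_wpDl// mulr_ge0 ?sqr_ge0// ltW.
have Vn0 : c^+2 * v + w != 0 by rewrite gt_eqF.
rewrite /gauss_pdf.
have sp z : 0 < z -> Num.sqrt (2 * pi * z) != 0.
  by move=> z0; rewrite gt_eqF// sqrtr_gt0 mulr_gt0// mulr_gt0// pi_gt0.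
have vw0 : 0 < v * w / (c ^+ 2 * v + w) by rewrite divr_gt0// mulr_gt0.
rewrite !expR_div2 ?sp//.
rewrite -!sqrtrM ?mulr_ge0 ?pi_ge0 ?ltW//.
have pi0 : pi != 0 :> R by rewrite gt_eqF// pi_gt0.
congr (expR _ / Num.sqrt _); field; by rewrite ?Vn0 ?gt_eqF.
Qed.

Lemma binorm_gp r m s : r^+2 < 1 ->
  binorm_pdf r m s = gp 0 1 m * gp (r * m) (1 - r^+2) s.
Proof.
move=> r1; have d0 : 0 < 1 - r^+2 by rewrite subr_gt0.
rewrite /binorm_pdf /gauss_pdf expR_div2 ?gt_eqF ?sqrtr_gt0 ?mulr_gt0 ?pi_gt0//.
rewrite -sqrtrM ?mulr_ge0 ?pi_ge0//.
have pi0 : pi != 0 :> R by rewrite gt_eqF// pi_gt0.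
have -> : 2 * pi * 1 * (2 * pi * (1 - r ^+ 2)) = (2 * pi)^+2 * (1 - r^+2) by ring.
rewrite sqrtrM; last exact: sqr_ge0.
rewrite sqrtr_sqr ger0_norm ?mulr_ge0 ?pi_ge0//.
congr (expR _ / _); field; by rewrite gt_eqF.
Qed.

End S.


Section S.
Variable R : realType.
Notation mu := (@lebesgue_measure R).
Notation gp := (@gauss_pdf R).
Implicit Types (m v x : R).

Lemma Rint_gp k m v : 0 < v -> Defs.Rint (fun s => k * gp m v s) = k.
Proof.
move=> v0; rewrite /Defs.Rint.
under eq_integral do rewrite EFinM.
rewrite integralZl//; last exact: gp_integrable.
by rewrite gp_int// mule1.
Qed.

Lemma transl (G : R -> R) m : continuous G -> (forall x, 0 <= G x) ->
  (\int[mu]_x (G x)%:E = \int[mu]_x (G (x - m))%:E)%E.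
Proof.
move=> cG G0.
have F'E : (fun x : R => x - m)^`()%classic = cst 1.
  apply/funext => x; rewrite derive1E deriveB// derive_id derive_cst subr0//.
rewrite (@increasing_ge0_integration_by_substitutionT _ (fun x => x - m) G)//.
- by apply: eq_integral => x _; rewrite F'E /= mulr1.
- by move=> x y xy; rewrite ltrD2r.
- by rewrite F'E; exact: cst_continuous.
- by rewrite F'E; exact: is_cvg_cst.
- by rewrite F'E; exact: is_cvg_cst.
- exact: cvg_addrr_Ny.
- exact: cvg_addrr.
Qed.

Lemma split0 (G : R -> R) : continuous G -> (forall x, 0 <= G x) ->
  (\int[mu]_x (G x)%:E = \int[mu]_(x in `[0%R, +oo[) (G x)%:E
      + \int[mu]_(x in `[0%R, +oo[) (G (- x))%:E)%E.
Proof.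
move=> cG G0.
have mG : measurable_fun [set: R] G by exact: measurable_realfun.continuous_measurable_fun.
rewrite -(setUv (`[0%R, +oo[%classic : set R)) ge0_integral_setU//=; last 4 first.
  exact: measurableC.
  by apply/measurable_EFinP; rewrite setUv.
  by move=> x _; rewrite lee_fin.
  exact/disj_setPCl.
congr +%E.
rewrite setCitvr.
rewrite integral_itv_bndo_bndc; last exact/measurable_EFinP/measurable_funTS.
rewrite -{1}oppr0 ge0_integration_by_substitutionNy//.
exact: continuous_subspaceT.
Qed.

Lemma reflect0 (G : R -> R) : continuous G -> (forall x, 0 <= G x) ->
  (\int[mu]_x (G x)%:E = \int[mu]_x (G (- x))%:E)%E.
Proof.
move=> cG G0.
rewrite split0// (split0 (G := fun x => G (- x)))//; last first.
  by move=> x; apply: continuous_comp; [exact: oppr_continuous|exact: cG].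
rewrite addeC; congr (_ + _)%E.
by apply: eq_integral => x _; rewrite opprK.
Qed.

End S.


Section S.
Variable R : realType.
Notation mu := (@lebesgue_measure R).
Notation gp := (@gauss_pdf R).
Implicit Types (m v x y : R).

Lemma gp0_even v y : gp 0 v (- y) = gp 0 v y.
Proof. by rewrite /gauss_pdf !subr0 sqrrN. Qed.

Lemma gp_ge0 m v x : 0 < v -> 0 <= gp m v x.
Proof. by move=> v0; apply/ltW/gp_gt0. Qed.

Lemma ehalf (x : \bar R) r : (x + x = r%:E)%E -> x = (r / 2)%:E.
Proof.
by case: x => [s||] //= [] <-; congr EFin; field.
Qed.

Lemma half0 v : 0 < v -> (\int[mu]_(y in `[0%R, +oo[) (gp 0 v y)%:E = (1/2)%:E)%E.
Proof.
move=> v0.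
have := split0 (gp_cont (m:=0) v0) (fun x => gp_ge0 0 x v0).
rewrite gp_int//.
under [X in (_ = _ + X)%E]eq_integral do rewrite gp0_even.
by move/esym/ehalf.
Qed.

Lemma dFp v y : 0 < v ->
  is_derive y (1:R) (fun z => - v * z * gp 0 v z) ((y^+2 - v) * gp 0 v y).
Proof.
move=> v0; rewrite /gauss_pdf.
have s0 : Num.sqrt (2 * pi * v) != 0.
  by rewrite gt_eqF// sqrtr_gt0 mulr_gt0// mulr_gt0// pi_gt0.
apply: is_derive_eq.
rewrite /GRing.scale /=.
field; by rewrite s0 gt_eqF.
Qed.

Lemma gp0_bound v y : 0 < v -> 0 < y ->
  y * gp 0 v y <= (2 * v / Num.sqrt (2 * pi * v)) / y.
Proof.
move=> v0 y0; rewrite /gauss_pdf subr0.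
have s0 : 0 < Num.sqrt (2 * pi * v) by rewrite sqrtr_gt0 mulr_gt0// mulr_gt0// pi_gt0.
have e1 : expR (- y ^+ 2 / (2 * v)) <= 2 * v / y^+2.
  rewrite mulNr expRN.
  have hp : 0 < y ^+ 2 / (2 * v) by rewrite divr_gt0// ?exprn_gt0// mulr_gt0.
  rewrite -[leRHS]invrK ler_pV2 ?inE ?unitfE ?gt_eqF ?expR_gt0 ?invr_gt0 ?divr_gt0 ?exprn_gt0 ?mulr_gt0//.
  rewrite invf_div (le_trans _ (expR_ge1Dx _))// lerDr; lra.
set E := expR _; set S := Num.sqrt _.
have -> : y * (E / S) = (y * E) * S^-1 by ring.
have -> : 2 * v / S / y = (2 * v / y) * S^-1 by ring.
rewrite ler_pM2r ?invr_gt0// -ler_pdivlMl//.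
by rewrite (le_trans e1)// le_eqVlt; apply/orP; left; apply/eqP; field; rewrite gt_eqF.
Qed.

Lemma Fp_cvg v : 0 < v ->
  (- v * n.+1%:R * gp 0 v n.+1%:R) @[n --> \oo] --> (0:R).
Proof.
move=> v0.
set K := 2 * v / Num.sqrt (2 * pi * v).
apply: (@squeeze_cvgr _ _ _ _ (fun n => - (v * K) * harmonic n) (cst 0)).
- near=> n; rewrite /harmonic /=; apply/andP; split.
    rewrite !mulNr lerN2 -mulrA -(mulrA v K) ler_pM2l//.
    by rewrite gp0_bound.
  rewrite !mulNr oppr_le0; apply: mulr_ge0; [apply: mulr_ge0; [exact: ltW|exact: ler0n] | exact: gp_ge0].
- rewrite -(mulr0 (- (v * K))); apply: cvgM; first exact: cvg_cst.
  exact: cvg_harmonic.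
- exact: cvg_cst.
Unshelve. all: end_near. Qed.

Lemma Fp_cont v : 0 < v -> continuous (fun z => - v * z * gp 0 v z).
Proof.
move=> v0 x; apply: differentiable_continuous; apply/derivable1_diffP.
by have [] := dFp x v0.
Qed.

Lemma S_eq v b : 0 < v -> 0 < b ->
  (\int[mu]_(y in `[0%R, b]) (y^+2 * gp 0 v y)%:E =
   (- v * b * gp 0 v b)%:E + v%:E * \int[mu]_(y in `[0%R, b]) (gp 0 v y)%:E)%E.
Proof.
move=> v0 b0.
have ci (f : R -> R) : continuous f -> mu.-integrable `[0%R, b] (EFin \o f).
  move=> cf; apply: continuous_compact_integrable; first exact: segment_compact.
  exact: continuous_subspaceT.
have cg := gp_cont (m:=0) v0.
under eq_integral => y _ do
  rewrite -[y^+2 * _](subrK (v * gp 0 v y)) -mulrBl EFinD.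
have c1 : continuous (fun y => (y^+2 - v) * gp 0 v y).
  move=> x; apply: (@continuousM R R (fun y => y^+2 - v) (gp 0 v)); last exact: cg.
  apply: (@continuousB R R^o R (fun y => y^+2) (cst v)); last exact: cvg_cst.
  exact: exprn_continuous.
have c2 : continuous (fun y => v * gp 0 v y).
  move=> z; apply: (@continuousM R R (cst v) (gp 0 v) z); [exact: cvg_cst|exact: cg].
rewrite integralD//; [|exact: ci c1|exact: ci c2].
rewrite (continuous_FTC2 (F := fun z => - v * z * gp 0 v z))//; first last.
- by move=> x _; have [_ <-] := dFp x v0; rewrite derive1E.
- split.
  + by move=> x _; have [] := dFp x v0.
  + by apply: cvg_at_right_filter; exact: Fp_cont.
  + by apply: cvg_at_left_filter; exact: Fp_cont.
- exact: continuous_subspaceT.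
under [X in (_ + X = _)%E]eq_integral do rewrite EFinM.
rewrite integralZl//; last exact: ci.
by rewrite mulr0 mul0r sube0.
Qed.

Lemma C2half v : 0 < v ->
  (\int[mu]_(y in `[0%R, +oo[) (y^+2 * gp 0 v y)%:E = (v / 2)%:E)%E.
Proof.
move=> v0.
have cg := gp_cont (m:=0) v0.
have f0 : forall y, 0 <= y^+2 * gp 0 v y.
  by move=> y; rewrite mulr_ge0 ?sqr_ge0// gp_ge0.
have cf : continuous (fun y => y^+2 * gp 0 v y).
  move=> x; apply: (@continuousM R R (fun y => y^+2) (gp 0 v)); last exact: cg.
  exact: exprn_continuous.
have L1 := ge0_cvgn_integral (mu:=mu) f0 (continuous_measurable_fun cf).
have L2 := ge0_cvgn_integral (mu:=mu) (fun y => gp_ge0 0 y v0)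
  (continuous_measurable_fun cg).
rewrite half0 // in L2.
move: L1; rewrite -cvg_shiftS => L1.
move: L2; rewrite -cvg_shiftS => L2.
suff L3 : (\int[mu]_(x in `[0%R, n.+1%:R]) (x ^+ 2 * gp 0 v x)%:E)%E @[n --> \oo]
   --> (v / 2)%:E.
  exact: (cvg_unique (@ereal_hausdorff R) L1 L3).
under eq_fun do rewrite S_eq// ?ltr0Sn.
have -> : ((v / 2)%:E = 0%:E + v%:E * (1/2)%:E :> \bar R)%E.
  by rewrite add0e -EFinM mul1r.
apply: cvgeD => //.
- apply: cvg_EFin; first exact: nearW.
  exact: Fp_cvg.
- apply: cvgeM => //; exact: cvg_cst.
Qed.

Lemma cmeas (f : R -> R) : continuous f -> measurable_fun setT (fun x => (f x)%:E).
Proof. by move=> cf; apply/measurable_EFinP; exact: continuous_measurable_fun. Qed.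

Lemma cont_poly2 (c2 c1 c0 : R) : continuous (fun y : R => c2 * y^+2 + c1 * y + c0).
Proof.
move=> x.
apply: (@continuousD R R^o R (fun y => c2 * y^+2 + c1 * y) (cst c0)); last exact: cvg_cst.
apply: (@continuousD R R^o R (fun y => c2 * y^+2) (fun y => c1 * y)).
  apply: (@continuousM R R (cst c2) (fun y => y^+2)); first exact: cvg_cst.
  exact: exprn_continuous.
apply: (@continuousM R R (cst c1) id); first exact: cvg_cst.
exact: cvg_id.
Qed.

Lemma cont_Pg (c2 c1 c0 m v : R) : 0 < v ->
  continuous (fun y => (c2 * y^+2 + c1 * y + c0) * gp m v y).
Proof.
move=> v0 x.
apply: (@continuousM R R (fun y => c2 * y^+2 + c1 * y + c0) (gp m v)).
  exact: cont_poly2.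
exact: gp_cont.
Qed.

Lemma int_of_fin (f : R -> R) r : continuous f -> (forall x, 0 <= f x) ->
  (\int[mu]_x (f x)%:E = r%:E)%E -> mu.-integrable setT (fun x => (f x)%:E).
Proof.
move=> cf f0 fr; apply/integrableP; split; first exact: cmeas.
under eq_integral do rewrite abse_EFin ger0_norm//.
by rewrite fr ltry.
Qed.

Lemma C2 v : 0 < v -> (\int[mu]_y (y^+2 * gp 0 v y)%:E = v%:E)%E.
Proof.
move=> v0.
have cf : continuous (fun y => y^+2 * gp 0 v y).
  move=> x; apply: (@continuousM R R (fun y => y^+2) (gp 0 v)); last exact: gp_cont.
  exact: exprn_continuous.
rewrite (split0 cf); last by move=> y; rewrite mulr_ge0 ?sqr_ge0// gp_ge0.
under [X in (_ + X)%E]eq_integral do rewrite sqrrN gp0_even.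
by rewrite C2half// -EFinD; congr EFin; field.
Qed.

Lemma poly_pos (y : R) : 0 < y^+2 + y + 1.
Proof. nra. Qed.

Lemma C1 v : 0 < v -> (\int[mu]_y ((y^+2 + y + 1) * gp 0 v y)%:E = (v + 1)%:E)%E.
Proof.
move=> v0.
have cP (c : R) : continuous (fun y => (y^+2 + c * y + 1) * gp 0 v y).
  have := cont_Pg (c2:=1) (c1:=c) (c0:=1) (m:=0) v0.
  by under eq_fun do rewrite mul1r.
have P0 (c : R) y : c ^+ 2 = 1 -> 0 <= (y^+2 + c * y + 1) * gp 0 v y.
  move=> c1; rewrite mulr_ge0 ?gp_ge0//.
  have : 0 < (c * y)^+2 + c * y + 1 by exact: poly_pos.
  by rewrite exprMn c1 mul1r => /ltW.
have h1 := cP 1; have h2 := cP (-1).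
under eq_integral do rewrite -[y in (_ + y + 1)]mul1r.
rewrite (_ : v + 1 = (2 * v + 2) / 2); last by field.
apply: ehalf.
rewrite [X in (X + _)%E](reflect0 h1) /=; last by move=> y; apply: P0; rewrite expr1n.
under eq_integral do rewrite gp0_even sqrrN mul1r -mulN1r.
rewrite -ge0_integralD//; try (by apply: cmeas);
  try (by move=> y _; rewrite lee_fin P0// ?expr1n// expr2 mulN1r opprK).
have E y : (((y ^+ 2 + -1 * y + 1) * gp 0 v y)%:E + ((y ^+ 2 + 1 * y + 1) * gp 0 v y)%:E
   = (2 * (y^+2 * gp 0 v y))%:E + (2 * gp 0 v y)%:E :> \bar R)%E.
  by rewrite -!EFinD; congr EFin; ring.
under eq_integral do rewrite E.
have cg := gp_cont (m:=0) v0.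
have cy2 : continuous (fun y => y^+2 * gp 0 v y).
  move=> x; apply: (@continuousM R R (fun y => y^+2) (gp 0 v)); last exact: gp_cont.
  exact: exprn_continuous.
have c2y2 : continuous (fun y => 2 * (y^+2 * gp 0 v y)).
  by move=> x; apply: (@continuousM R R (cst 2) (fun y => y^+2 * gp 0 v y)); [exact: cvg_cst|exact: cy2].
have c2g : continuous (fun y => 2 * gp 0 v y).
  by move=> x; apply: (@continuousM R R (cst 2) (gp 0 v)); [exact: cvg_cst|exact: cg].
rewrite ge0_integralD//; try (by apply: cmeas);
  try (by move=> y _; rewrite lee_fin; first [exact: gp_ge0 | apply: mulr_ge0;
    [exact: sqr_ge0|exact: gp_ge0] | apply: mulr_ge0 => //; exact: gp_ge0 | apply: mulr_ge0 => //; apply: mulr_ge0; [exact: sqr_ge0|exact: gp_ge0]]).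
under [X in (X + _)%E]eq_integral do rewrite EFinM.
under [X in (_ + X)%E]eq_integral do rewrite EFinM.
rewrite !ge0_integralZl//; try (by apply: cmeas);
  try (by move=> y _; rewrite lee_fin; first [exact: gp_ge0 | apply: mulr_ge0;
    [exact: sqr_ge0|exact: gp_ge0] | apply: mulr_ge0 => //; exact: gp_ge0 | apply: mulr_ge0 => //; apply: mulr_ge0; [exact: sqr_ge0|exact: gp_ge0]]).
by rewrite C2// gp_int// -!EFinM -EFinD; congr EFin; field.
Qed.

Lemma gp_shift m v x : gp 0 v (x - m) = gp m v x.
Proof. by rewrite /gauss_pdf subr0. Qed.

Lemma M2 m v : 0 < v -> (\int[mu]_x ((x - m)^+2 * gp m v x)%:E = v%:E)%E.
Proof.
move=> v0.
have cy2 : continuous (fun y => y^+2 * gp 0 v y).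
  move=> x; apply: (@continuousM R R (fun y => y^+2) (gp 0 v)); last exact: gp_cont.
  exact: exprn_continuous.
rewrite -(C2 v0) (transl m cy2); last first.
  by move=> y; apply: mulr_ge0; [exact: sqr_ge0|exact: gp_ge0].
by apply: eq_integral => x _; rewrite gp_shift.
Qed.

Lemma M1 m v : 0 < v ->
  (\int[mu]_x (((x - m)^+2 + (x - m) + 1) * gp m v x)%:E = (v + 1)%:E)%E.
Proof.
move=> v0.
have c1 : continuous (fun y => (y^+2 + y + 1) * gp 0 v y).
  have := cont_Pg (c2:=1) (c1:=1) (c0:=1) (m:=0) v0.
  by under eq_fun do rewrite !mul1r.
rewrite -(C1 v0) (transl m c1); last first.
  by move=> y; apply: mulr_ge0; [exact/ltW/poly_pos|exact: gp_ge0].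
by apply: eq_integral => x _; rewrite gp_shift.
Qed.

Lemma MOM m v c2 c1 c0 : 0 < v ->
  (\int[mu]_x ((c2 * x^+2 + c1 * x + c0) * gp m v x)%:E
     = (c2 * (v + m^+2) + c1 * m + c0)%:E)%E.
Proof.
move=> v0.
set a := c1 + 2 * c2 * m; set b := c2 - a; set c := c2 * m^+2 + c1 * m + c0 - a.
have E x : ((c2 * x^+2 + c1 * x + c0) * gp m v x)%:E =
  (a%:E * (((x - m)^+2 + (x - m) + 1) * gp m v x)%:E
   + b%:E * ((x - m)^+2 * gp m v x)%:E + c%:E * (gp m v x)%:E)%E.
  by rewrite -!EFinM -!EFinD; congr EFin; rewrite /c /b /a; ring.
under eq_integral do rewrite E.
have cQ1 : continuous (fun x => ((x - m)^+2 + (x - m) + 1) * gp m v x).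
  have -> : (fun x => ((x - m)^+2 + (x - m) + 1) * gp m v x) =
    (fun x => (1 * x^+2 + (1 - 2 * m) * x + (m^+2 - m + 1)) * gp m v x).
    by apply/funext => x; congr (_ * _); ring.
  exact: cont_Pg.
have cQ2 : continuous (fun x => (x - m)^+2 * gp m v x).
  have -> : (fun x => (x - m)^+2 * gp m v x) =
    (fun x => (1 * x^+2 + (- 2 * m) * x + m^+2) * gp m v x).
    by apply/funext => x; congr (_ * _); ring.
  exact: cont_Pg.
have i1 := int_of_fin cQ1 (fun x => mulr_ge0 (ltW (poly_pos _)) (gp_ge0 _ _ v0)) (M1 m v0).
have i2 := int_of_fin cQ2 (fun x => mulr_ge0 (sqr_ge0 _) (gp_ge0 _ _ v0)) (M2 m v0).
have i3 := gp_integrable m v0.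
rewrite integralD//; last exact: integrableZl.
  rewrite integralD//; [|exact: integrableZl|exact: integrableZl].
  rewrite !integralZl// M1// M2// gp_int//.
  by rewrite -!EFinM -!EFinD; congr EFin; rewrite /c /b /a; ring.
apply: integrableD => //; exact: integrableZl.
Qed.

End S.


Section S.
Variable R : realType.
Notation mu := (@lebesgue_measure R).
Notation gp := (@gauss_pdf R).
Implicit Types (m v x y : R).

Lemma gp_prod' mu0 v c w s a : 0 < v -> 0 < w ->
  gp mu0 v s * gp (c * s) w a =
  gp (c * mu0) (c^+2 * v + w) a *
  gp ((mu0 * w + c * v * a) / (c^+2 * v + w)) (v * w / (c^+2 * v + w)) s.
Proof. by move=> v0 w0; apply: gp_prod. Qed.

Lemma int_out mu0 v c w a K : 0 < v -> 0 < w ->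
  Defs.Rint (fun s => K * (gp mu0 v s * gp (c * s) w a)) =
  K * gp (c * mu0) (c^+2 * v + w) a.
Proof.
move=> v0 w0.
have V0 : 0 < c^+2 * v + w by rewrite ltr_wpDl// mulr_ge0 ?sqr_ge0// ltW.
under eq_fun do rewrite gp_prod'// mulrA.
by rewrite Rint_gp// divr_gt0// mulr_gt0.
Qed.

Section Q.
Variables (r A B : R).
Hypotheses (hr : r^+2 < 1) (hA : 0 < A) (hA1 : A^+2 < 1) (hB : 0 < B) (hB1 : B^+2 < 1).

Let pr : 0 < 1 - r^+2. Proof. by rewrite subr_gt0. Qed.
Let pA : 0 < 1 - A^+2. Proof. by rewrite subr_gt0. Qed.
Let pB : 0 < 1 - B^+2. Proof. by rewrite subr_gt0. Qed.
Let r2ge0 : 0 <= r^+2. Proof. exact: sqr_ge0. Qed.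
Let pAr : 0 < 1 - A^+2 * r^+2.
Proof. rewrite subr_gt0 (le_lt_trans _ hA1)// ger_pMr ?exprn_gt0//; exact: ltW. Qed.
Let pABr : 0 < 1 - A^+2 * B^+2 * r^+2.
Proof.
rewrite subr_gt0 (le_lt_trans _ hA1)// -mulrA ger_pMr ?exprn_gt0//.
rewrite -[leRHS](mul1r 1) ler_pM ?sqr_ge0//; exact: ltW.
Qed.

Lemma sA : Num.sqrt (A^+2) = A.
Proof. by rewrite sqrtr_sqr gtr0_norm. Qed.
Lemma sB : Num.sqrt (1 - (1 - B^+2)) = B.
Proof. by rewrite opprB addrCA subrr addr0 sqrtr_sqr gtr0_norm. Qed.

Lemma q_amb_eq a m b :
  q_amb r (A^+2) (1 - B^+2) a m b =
  gp 0 1 m * gp (A * r * m) (1 - A^+2 * r^+2) a * gp (B * a) (1 - B^+2) b.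
Proof.
rewrite /q_amb /joint_pdf sA sB.
have -> : (fun s0 => binorm_pdf r m s0 * gp (A * s0) (1 - A ^+ 2) a * gp (B * a) (1 - B ^+ 2) b)
  = (fun s0 => (gp 0 1 m * gp (B * a) (1 - B ^+ 2) b) *
      (gp (r * m) (1 - r^+2) s0 * gp (A * s0) (1 - A^+2) a)).
  by apply/funext => s0; rewrite binorm_gp//; ring.
rewrite int_out//.
have -> : A * (r * m) = A * r * m by ring.
have -> : A ^+ 2 * (1 - r ^+ 2) + (1 - A ^+ 2) = 1 - A^+2 * r^+2 by ring.
ring.
Qed.

Lemma q_mb_eq m b :
  q_mb r (A^+2) (1 - B^+2) m b = gp 0 1 m * gp (A * B * r * m) (1 - A^+2 * B^+2 * r^+2) b.
Proof.
rewrite /q_mb.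
under eq_fun do rewrite q_amb_eq -mulrA.
rewrite int_out//.
have -> : B * (A * r * m) = A * B * r * m by ring.
by have -> : B ^+ 2 * (1 - A ^+ 2 * r ^+ 2) + (1 - B ^+ 2) = 1 - A^+2 * B^+2 * r^+2 by ring.
Qed.

Lemma q_ab_eq a b :
  q_ab r (A^+2) (1 - B^+2) a b = gp 0 1 a * gp (B * a) (1 - B^+2) b.
Proof.
rewrite /q_ab.
have -> : (fun m => q_amb r (A ^+ 2) (1 - B ^+ 2) a m b) =
  (fun m => gp (B * a) (1 - B^+2) b * (gp 0 1 m * gp (A * r * m) (1 - A^+2 * r^+2) a)).
  by apply/funext => m; rewrite q_amb_eq; ring.
rewrite int_out//.
have -> : A * r * 0 = 0 by ring.
have -> : (A * r) ^+ 2 * 1 + (1 - A ^+ 2 * r ^+ 2) = 1 by ring.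
ring.
Qed.

Lemma q_b_eq b : q_b r (A^+2) (1 - B^+2) b = gp 0 1 b.
Proof.
rewrite /q_b.
have -> : (fun a => q_ab r (A ^+ 2) (1 - B ^+ 2) a b) =
  (fun a => 1 * (gp 0 1 a * gp (B * a) (1 - B^+2) b)).
  by apply/funext => a; rewrite q_ab_eq mul1r.
rewrite int_out//.
have -> : B * 0 = 0 by ring.
have -> : B ^+ 2 * 1 + (1 - B ^+ 2) = 1 by ring.
ring.
Qed.

Let V2 := B^+2 * (1 - A^+2 * r^+2) + (1 - B^+2).
Let pV2 : 0 < V2.
Proof. by have -> : V2 = 1 - A^+2 * B^+2 * r^+2 by rewrite /V2; ring. Qed.
Definition mu1 m b := (A * r * m * (1 - B^+2) + B * (1 - A^+2 * r^+2) * b) /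
  (B^+2 * (1 - A^+2 * r^+2) + (1 - B^+2)).
Definition v1 := (1 - A^+2 * r^+2) * (1 - B^+2) /
  (B^+2 * (1 - A^+2 * r^+2) + (1 - B^+2)).

Lemma cond_bm_eq m b : cond_a_bm r (A^+2) (1 - B^+2) m b = gp (mu1 m b) v1.
Proof.
apply/funext => a; rewrite /cond_a_bm q_amb_eq q_mb_eq.
have N : gp 0 1 m * gp (A * r * m) (1 - A^+2 * r^+2) a * gp (B * a) (1 - B^+2) b =
    gp 0 1 m * gp (A * B * r * m) (1 - A^+2 * B^+2 * r^+2) b * gp (mu1 m b) v1 a.
  rewrite -(mulrA (gp 0 1 m)) -[RHS](mulrA (gp 0 1 m)) (gp_prod' (A * r * m) B)//.
  rewrite /mu1 /v1.
  have -> : B * (A * r * m) = A * B * r * m by ring.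
  by have -> : B ^+ 2 * (1 - A ^+ 2 * r ^+ 2) + (1 - B ^+ 2) = 1 - A^+2 * B^+2 * r^+2 by ring.
have g1 := gp_gt0 0 m (@ltr01 R).
have g2 := gp_gt0 (A * B * r * m) b pABr.
rewrite N; move: g1 g2; move: (gp 0 1 m) (gp (A * B * r * m) _ b) (gp (mu1 m b) v1 a).
by move=> X Y Z g1 g2; rewrite [X * Y * Z]mulrC mulfK// mulf_neq0// gt_eqF.
Qed.

Lemma cond_b_eq b : cond_a_b r (A^+2) (1 - B^+2) b = gp (B * b) (1 - B^+2).
Proof.
apply/funext => a; rewrite /cond_a_b q_ab_eq q_b_eq (gp_prod' 0 B)//.
have -> : B * 0 = 0 by ring.
have -> : B ^+ 2 * 1 + (1 - B ^+ 2) = 1 by ring.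
have -> : (0 * (1 - B ^+ 2) + B * 1 * b) / 1 = B * b by rewrite divr1; ring.
have -> : 1 * (1 - B ^+ 2) / 1 = 1 - B^+2 by rewrite divr1 mul1r.
have g1 := gp_gt0 0 b (@ltr01 R).
move: g1; move: (gp 0 1 b) (gp (B * b) _ a) => X Y g1.
by rewrite [X * Y]mulrC mulfK// gt_eqF.
Qed.

End Q.

Lemma ln_sqrt x : 0 < x -> ln (Num.sqrt x) = ln x / 2.
Proof.
move=> x0.
have -> : ln x = ln (Num.sqrt x) *+ 2 by rewrite -lnXn ?sqr_sqrtr ?ltW// sqrtr_gt0.
by rewrite -mulr_natr; field.
Qed.

Lemma ln_ratio m1 v1 m2 v2 a : 0 < v1 -> 0 < v2 ->
  ln (gp m1 v1 a / gp m2 v2 a) =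
  - (a - m1)^+2 / (2 * v1) + (a - m2)^+2 / (2 * v2) + (ln v2 - ln v1) / 2.
Proof.
move=> p1 p2; rewrite /gauss_pdf.
have pi0 : 0 < pi :> R by exact: pi_gt0.
have s1 : 0 < Num.sqrt (2 * pi * v1) by rewrite sqrtr_gt0 !mulr_gt0.
have s2 : 0 < Num.sqrt (2 * pi * v2) by rewrite sqrtr_gt0 !mulr_gt0.
rewrite (_ : _ / _ = expR (- (a - m1) ^+ 2 / (2 * v1) - (- (a - m2) ^+ 2 / (2 * v2)))
    * (Num.sqrt (2 * pi * v2) / Num.sqrt (2 * pi * v1))); last first.
  rewrite expRB; field; by rewrite !gt_eqF ?expR_gt0.
have t2 : 0 < 2 :> R by [].
have q1 : 0 < 2 * pi * v1 by rewrite !mulr_gt0.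
have q2 : 0 < 2 * pi * v2 by rewrite !mulr_gt0.
rewrite (lnM (expR_gt0 _) (divr_gt0 s2 s1)) expRK (ln_div s2 s1) !ln_sqrt//.
rewrite (lnM (mulr_gt0 t2 pi0) p1) (lnM (mulr_gt0 t2 pi0) p2).
by field; rewrite !gt_eqF.
Qed.

End S.


Section S.
Variable R : realType.
Notation mu := (@lebesgue_measure R).
Notation gp := (@gauss_pdf R).
Implicit Types (m v x y : R).

Lemma KL_gp m1 v1 m2 v2 : 0 < v1 -> 0 < v2 ->
  KL (gp m1 v1) (gp m2 v2) =
  ((ln v2 - ln v1 + (v1 + (m1 - m2)^+2) / v2 - 1) / 2)%:E.
Proof.
move=> p1 p2; rewrite /KL.
set c2 := 1 / (2 * v2) - 1 / (2 * v1).
set c1 := m1 / v1 - m2 / v2.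
set c0 := m2^+2 / (2 * v2) - m1^+2 / (2 * v1) + (ln v2 - ln v1) / 2.
have E a : gp m1 v1 a * ln (gp m1 v1 a / gp m2 v2 a) =
    (c2 * a^+2 + c1 * a + c0) * gp m1 v1 a.
  rewrite ln_ratio//; move: (gp m1 v1 a) => G; rewrite /c2 /c1 /c0.
  by field; rewrite !gt_eqF.
under eq_integral do rewrite E.
rewrite MOM//; congr EFin; rewrite /c2 /c1 /c0.
by field; rewrite !gt_eqF.
Qed.

Section Q2.
Variables (r A B : R).
Hypotheses (hr : r^+2 < 1) (hA : 0 < A) (hA1 : A^+2 < 1) (hB : 0 < B) (hB1 : B^+2 < 1).

Let pr : 0 < 1 - r^+2. Proof. by rewrite subr_gt0. Qed.
Let pA : 0 < 1 - A^+2. Proof. by rewrite subr_gt0. Qed.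
Let pB : 0 < 1 - B^+2. Proof. by rewrite subr_gt0. Qed.
Let pAr : 0 < 1 - A^+2 * r^+2.
Proof. rewrite subr_gt0 (le_lt_trans _ hA1)// ger_pMr ?exprn_gt0//; exact: ltW. Qed.
Let pABr : 0 < 1 - A^+2 * B^+2 * r^+2.
Proof.
rewrite subr_gt0 (le_lt_trans _ hA1)// -mulrA ger_pMr ?exprn_gt0//.
rewrite -[leRHS](mul1r 1) ler_pM ?sqr_ge0//; exact: ltW.
Qed.
Let pV2 : 0 < B^+2 * (1 - A^+2 * r^+2) + (1 - B^+2).
Proof. by have -> : B^+2 * (1 - A^+2 * r^+2) + (1 - B^+2) = 1 - A^+2 * B^+2 * r^+2 by ring. Qed.
Let pv1 : 0 < v1 r A B.
Proof. by rewrite /v1 divr_gt0// mulr_gt0. Qed.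

Let L := ln (1 - B^+2) - ln (v1 r A B).
Let k := (1 - B^+2) * A * r / (1 - A^+2 * B^+2 * r^+2).
Let rr := A * B * r.
Let ka := k^+2 / (2 * (1 - B^+2)).
Let C0 := (L + v1 r A B / (1 - B^+2) - 1) / 2.

Lemma mu1_diff m b : mu1 r A B m b - B * b = k * (m - rr * b).
Proof.
rewrite /mu1 /k /rr.
have h1 : B^+2 * (1 - A^+2 * r^+2) + (1 - B^+2) != 0 by rewrite gt_eqF.
have h2 : 1 - A^+2 * B^+2 * r^+2 != 0 by rewrite gt_eqF.
by field; rewrite !exprMn gt_eqF.
Qed.

Lemma inner_pt m b :
  ((q_mb r (A^+2) (1 - B^+2) m b)%:E *
    KL (cond_a_bm r (A^+2) (1 - B^+2) m b) (cond_a_b r (A^+2) (1 - B^+2) b))%E =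
  (((gp 0 1 m * ka * rr^+2) * b^+2 + (- 2 * gp 0 1 m * ka * rr * m) * b
    + gp 0 1 m * (ka * m^+2 + C0)) * gp (A * B * r * m) (1 - A^+2 * B^+2 * r^+2) b)%:E.
Proof.
rewrite q_mb_eq// cond_bm_eq// cond_b_eq// KL_gp// -EFinM; congr EFin.
rewrite mu1_diff -/L /C0 /ka.
move: (gp 0 1 m) (gp (A * B * r * m) _ b) => G H.
by field; rewrite gt_eqF.
Qed.

Let e2 := ka * (1 - rr^+2)^+2.
Let e0 := ka * rr^+2 * (1 - A^+2 * B^+2 * r^+2) + C0.

Lemma inner_int m :
  (\int[mu]_b ((q_mb r (A^+2) (1 - B^+2) m b)%:E *
    KL (cond_a_bm r (A^+2) (1 - B^+2) m b) (cond_a_b r (A^+2) (1 - B^+2) b)))%E =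
  ((e2 * m^+2 + 0 * m + e0) * gp 0 1 m)%:E.
Proof.
under eq_integral do rewrite inner_pt.
rewrite MOM//; congr EFin.
rewrite /e2 /e0 /rr.
move: (gp 0 1 m) => G.
ring.
Qed.

Lemma EKL : expected_KL r (A^+2) (1 - B^+2) = (L / 2)%:E.
Proof.
rewrite /expected_KL.
under eq_integral do rewrite inner_int.
rewrite MOM//.
congr EFin.
rewrite /e2 /e0 /C0 /ka /k /rr /v1.
have h1 : B^+2 * (1 - A^+2 * r^+2) + (1 - B^+2) != 0 by rewrite gt_eqF.
have h2 : 1 - A^+2 * B^+2 * r^+2 != 0 by rewrite gt_eqF.
have h3 : 1 - B^+2 != 0 by rewrite gt_eqF.
by field; rewrite exprMn h1 h3.
Qed.

Lemma final_ineq :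
  - (ln (1 - (1 - B^+2) * A^+2 * r^+2) + (1 - B^+2) * A^+2 * r^+2) / 2 <= L / 2.
Proof.
set c := A^+2 * r^+2.
have c0 : 0 <= c by rewrite mulr_ge0 ?sqr_ge0.
have -> : (1 - B^+2) * A^+2 * r^+2 = (1 - B^+2) * c by rewrite /c; ring.
have hx0 : 0 <= (1 - B^+2) * c by rewrite mulr_ge0// ltW.
have hx1 : 0 < 1 - (1 - B^+2) * c.
  have -> : 1 - (1 - B^+2) * c = (1 - c) + B^+2 * c by ring.
  have h1 : 0 < 1 - c by exact: pAr.
  have h2 : 0 <= B^+2 * c by rewrite mulr_ge0 ?sqr_ge0.
  lra.
rewrite ler_pM2r ?invr_gt0//.
have key : ln (v1 r A B) <= ln (1 - B^+2) + ln (1 - (1 - B^+2) * c).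
  rewrite -lnM ?posrE// ler_ln ?posrE ?mulr_gt0//.
  rewrite /v1 ler_pdivrMr//.
  rewrite -subr_ge0.
  have -> : (1 - B ^+ 2) * (1 - (1 - B ^+ 2) * c) * (B ^+ 2 * (1 - A ^+ 2 * r ^+ 2) + (1 - B ^+ 2))
     - (1 - A ^+ 2 * r ^+ 2) * (1 - B ^+ 2) = (1 - B^+2)^+2 * B^+2 * c^+2 by rewrite /c; ring.
    by apply: mulr_ge0; [apply: mulr_ge0|]; exact: sqr_ge0.
  by rewrite invr_gt0.
rewrite /L; lra.
Qed.

End Q2.
End S.


Theorem corollary1 (R : realType) (rho abar beta : R)
  (hbeta0 : 0 < beta) (hbeta1 : beta < 1)
  (habar0 : 0 < abar) (habar1 : abar < 1)
  (hrho : rho ^+ 2 < 1) :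
  ((- (ln (1 - beta * abar * rho ^+ 2) + beta * abar * rho ^+ 2) / 2)%:E
     <= expected_KL rho abar beta)%E.
Proof.
have [A hA eA] : exists2 A : R, 0 < A & abar = A^+2.
  by exists (Num.sqrt abar); rewrite ?sqrtr_gt0 ?sqr_sqrtr// ltW.
have [B hB eB] : exists2 B : R, 0 < B & beta = 1 - B^+2.
  exists (Num.sqrt (1 - beta)); first by rewrite sqrtr_gt0 subr_gt0.
  by rewrite sqr_sqrtr ?subr_ge0 ?ltW//; ring.
subst abar beta.
have hB1 : B^+2 < 1 by rewrite -subr_gt0.
rewrite EKL// lee_fin.
exact: final_ineq.
Qed.
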